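(* Let $a_1,\dots,a_n$ be positive integers, $P=\mathbf{a_1}\oplus\cdots\oplus\mathbf{a_n}$ with top antichain summand $A_n$, and $I\in\mathcal{IC}(P)$. Then \[\mathrm{Row}(I)=\begin{cases}P-I & \text{if } I=\emptyset,\ A_n\subseteq I,\text{ or } I\subseteq A_n,\\ \Delta(\lceil I\rceil)-\Delta(\mathrm{Min}(I)) & \text{otherwise.}\end{cases}\]
   Context: For posets $P,Q$, the ordinal sum $P\oplus Q$ has underlying set the disjoint union of $P$ and $Q$, with $x\le y$ iff $x\le_P y$, or $x\le_Q y$, or $x\in P$ and $y\in Q$. $\mathbf{a}$ denotes an antichain with $a$ elements; in $\mathbf{a_1}\oplus\cdots\oplus\mathbf{a_n}$, $A_i$ is the $i$-th summand, $A_1$ at the bottom. All posets are finite. A subset $I\subseteq P$ is interval-closed if for all $x,y\in I$ and $z\in P$ with $x\le z\le y$ we have $z\in I$; $\mathcal{IC}(P)$ is the set of interval-closed subsets of $P$. For $x\in P$ the toggle $t_x:\mathcal{IC}(P)\to\mathcal{IC}(P)$ is defined by $t_x(I)=I\triangle\{x\}$ if $I\triangle\{x\}\in\mathcal{IC}(P)$ and $t_x(I)=I$ otherwise. Rowmotion is $\mathrm{Row}=t_{x_1}\circ t_{x_2}\circ\cdots\circ t_{x_N}$, where $(x_1,\dots,x_N)$ is a linear extension of $P$ (toggling from the top down). For $S\subseteq P$, $\Delta(S)$ is the smallest order ideal containing $S$ and $\nabla(S)$ the smallest order filter containing $S$; $\mathrm{Min}(S)$ is the set of minimal elements of $S$;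 the ceiling $\lceil I\rceil$ is the set of minimal elements of $\nabla(I)-I$. *)

(* Defs.v *)
From mathcomp Require Import all_boot.
Set Implicit Arguments. Unset Strict Implicit. Unset Printing Implicit Defensive.

(* A finite poset is given by a finType T together with its order relation
   [le : rel T] (assumed to be a partial order where it matters). *)
Section GenPoset.
Variables (T : finType) (le : rel T).

Definition interval_closed (I : {set T}) : bool :=
  [forall x in I, forall y in I, forall z, (le x z && le z y) ==> (z \in I)].

Definition sdiff1 (I : {set T}) (x : T) : {set T} :=
  if x \in I then I :\ x else x |: I.

Definition toggle (x : T) (I : {set T}) : {set T} :=
  if interval_closed (sdiff1 I x) then sdiff1 I x else I.

Definition linear_extension (s : seq T) : Prop :=
  perm_eq s (enum T) /\
  forall x y, le x y -> index x s <= index y s.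

(* Row = t_{x_1} o t_{x_2} o ... o t_{x_N} (toggling from the top down) *)
Definition Row (s : seq T) (I : {set T}) : {set T} :=
  foldr toggle I s.

Definition Delta (S : {set T}) : {set T} := [set y | [exists x in S, le y x]].
Definition Nabla (S : {set T}) : {set T} := [set y | [exists x in S, le x y]].

Definition Min (S : {set T}) : {set T} :=
  [set x in S | [forall y in S, le y x ==> (y == x)]].

Definition ceiling (I : {set T}) : {set T} := Min (Nabla I :\: I).

End GenPoset.

(* The ordinal sum a_1 (+) ... (+) a_n of antichains: elements are pairs
   (i, j) with i < n the summand (level, 0 = bottom) and j < a_i. *)
Definition OSum (n : nat) (a : 'I_n -> nat) : finType :=
  {i : 'I_n & 'I_(a i)}.

Definition osum_le (n : nat) (a : 'I_n -> nat) : rel (OSum a) :=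
  fun x y => (x == y) || (nat_of_ord (tag x) < nat_of_ord (tag y)).

(* the i-th summand A_{i+1} (0-indexed) *)
Definition summand (n : nat) (a : 'I_n -> nat) (i : nat) : {set OSum a} :=
  [set x : OSum a | nat_of_ord (tag x) == i].

Definition top_summand (n : nat) (a : 'I_n -> nat) : {set OSum a} :=
  summand a n.-1.

(* Main.v *)
Require Import Defs.
From mathcomp Require Import all_boot zify.
Set Implicit Arguments. Unset Strict Implicit. Unset Printing Implicit Defensive.


Ltac slia := repeat match goal with H : ?P |- _ =>
  lazymatch P with
  | is_true (leq _ _) => fail
  | @eq bool _ _ => clear H
  | @eq _ _ _ => fail
  | not (@eq _ _ _) => fail
  | is_true (~~ (_ == _)) => fail
  | _ => clear H
  end end; lia.

Section S.
Variables (n : nat) (a : 'I_n -> nat).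
Hypothesis hn : 0 < n.
Hypothesis ha : forall i, 0 < a i.
Local Notation T := (OSum a).
Local Notation le := (@osum_le n a).
Definition lv (x : T) : nat := nat_of_ord (tag x).

Lemma lv_lt (x : T) : lv x < n.
Proof. exact: ltn_ord. Qed.

Lemma lev_ex q : q < n -> exists y : T, lv y = q.
Proof.
move=> hq.
exists (existT (fun i => 'I_(a i)) (Ordinal hq) (Ordinal (ha (Ordinal hq)))).
by [].
Qed.

Lemma icP (J : {set T}) :
  reflect (forall u w z, u \in J -> w \in J -> lv u < lv z -> lv z < lv w -> z \in J)
          (interval_closed le J).
Proof.
apply: (iffP forallP) => H.
- move=> u w z uJ wJ h1 h2.
  move/implyP: (H u) => /(_ uJ) /forallP /(_ w) /implyP /(_ wJ) /forallP /(_ z) /implyP.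
  apply. by rewrite /osum_le -/(lv u) -/(lv z) -/(lv w) h1 h2 !orbT.
- move=> u; apply/implyP => uJ; apply/forallP => w; apply/implyP => wJ.
  apply/forallP => z; apply/implyP => /andP [].
  rewrite /osum_le -/(lv u) -/(lv z) -/(lv w).
  case/orP => [/eqP <- //|h1]; case/orP => [/eqP -> //|h2].
  exact: H h1 h2.
Qed.

Lemma toggle_ic x (J : {set T}) : interval_closed le J -> interval_closed le (toggle le x J).
Proof. by rewrite /toggle; case: ifP. Qed.

Variable I : {set T}.
Hypothesis hI : interval_closed le I.

Definition St (R : {set T}) (t : seq T) : {set T} :=
  [set y | if y \in t then y \in R else y \in I].

Definition P1 (R : {set T}) := forall x, x \in I ->
  (x \in R <-> (exists2 u, u \in I & lv u < lv x) /\ (exists2 w, w \in R & lv x < lv w)).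
Definition P2 (R : {set T}) := forall x, x \notin I ->
  (x \in R <-> (forall w z, w \in R -> lv x < lv z -> lv z < lv w -> z \in R) /\
               (forall u z, u \in I -> lv u < lv z -> lv z < lv x -> z \in I)).

Lemma step (R : {set T}) (x : T) (t : seq T) :
  P1 R -> P2 R -> x \notin t -> (forall y, lv x < lv y -> y \in t) ->
  (forall y, y \in t -> lv x <= lv y) ->
  interval_closed le (St R t) -> toggle le x (St R t) = St R (x :: t).
Proof.
move=> p1 p2 xt Hgt Hin icS.
set S := St R t in icS *.
have xS : (x \in S) = (x \in I) by rewrite inE (negbTE xt).
have Sgt y : lv x < lv y -> (y \in S) = (y \in R) by move=> h; rewrite inE Hgt.
have Slt y : lv y < lv x -> (y \in S) = (y \in I).
  move=> h; rewrite inE; case: ifP => // /Hin; lia.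
rewrite /toggle /sdiff1 xS.
case xI: (x \in I) => /=.
- have -> : interval_closed le (S :\ x) = ~~ (x \in R).
    apply/idP/idP.
    + move/icP => ic; apply/negP => xR.
      have [[u uI hu] [w wR hw]] := (p1 x xI).1 xR.
      suff : x \in S :\ x by rewrite !inE eqxx.
      apply: (ic u w x) => //; rewrite in_setD1.
      * rewrite Slt // uI andbT; apply/eqP => e; rewrite e in hu; lia.
      * rewrite Sgt // wR andbT; apply/eqP => e; rewrite e in hw; lia.
    + move=> xR; apply/icP => u w z; rewrite !in_setD1 => /andP [ux uS] /andP [wx wS] h1 h2.
      apply/andP; split; last by move/icP: icS => ic; apply: (ic u w z).
      apply/eqP => e; subst z; move/negP: xR; apply; apply/(p1 x xI); split.
      * by exists u => //; rewrite -Slt.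
      * by exists w => //; rewrite -Sgt.
  case xR: (x \in R) => /=; apply/setP => y; rewrite !inE;
    case: (eqVneq y x) => [->|yx] /=; rewrite ?xI ?xR ?(negbTE xt) //=.
- have -> : interval_closed le (x |: S) = (x \in R).
    apply/idP/idP.
    + move/icP => ic; apply/(p2 x (negbT xI)).
      split.
      * move=> w z wR h1 h2.
        have : z \in x |: S.
          apply: (ic x w z) => //; first by rewrite setU11.
          rewrite in_setU1 Sgt ?wR ?orbT //; lia.
        rewrite in_setU1 => /orP [/eqP e|zS]; first by subst z; lia.
        by rewrite -Sgt.
      * move=> u z uI h1 h2.
        have : z \in x |: S.
          apply: (ic u x z) => //; last by rewrite setU11.
          rewrite in_setU1 Slt ?uI ?orbT //; lia.
        rewrite in_setU1 => /orP [/eqP e|zS]; first by subst z; lia.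
        by rewrite -Slt.
    + move=> xR; have [A B] := (p2 x (negbT xI)).1 xR.
      apply/icP => u w z; rewrite !in_setU1 => /orP [/eqP ->|uS] /orP [/eqP ->|wS] h1 h2.
      * lia.
      * have wR : w \in R by rewrite -Sgt // (ltn_trans h1 h2).
        by rewrite Sgt ?(A w z) ?orbT.
      * have uI : u \in I by rewrite -Slt // (ltn_trans h1 h2).
        by rewrite Slt ?(B u z) ?orbT.
      * by move/icP: icS => ic; rewrite (ic u w z) ?orbT.
  case xR: (x \in R) => /=; apply/setP => y; rewrite !inE;
    case: (eqVneq y x) => [->|yx] /=; rewrite ?xI ?xR ?(negbTE xt) //=.
Qed.

Variable s : seq T.
Hypothesis hs : linear_extension le s.

Lemma engine (R : {set T}) : P1 R -> P2 R -> Row le s I = R.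
Proof.
move=> p1 p2.
have us : uniq s by rewrite (perm_uniq (proj1 hs)) enum_uniq.
have ms y : y \in s by rewrite (perm_mem (proj1 hs)) mem_enum.
suff H : forall t p, s = p ++ t ->
    foldr (toggle le) I t = St R t /\ interval_closed le (St R t).
  have [H1 _] := H s [::] erefl.
  rewrite /Row H1; apply/setP => y; by rewrite inE ms.
elim => [|x t IH] p e.
  have -> : St R [::] = I by apply/setP => y; rewrite inE.
  by [].
have [H1 H2] := IH (rcons p x) ltac:(by rewrite cat_rcons).
move: us; rewrite e cat_uniq => /and3P [_ hp] /= /andP [xt _].
have ixs : index x s = size p.
  rewrite e index_cat /= eqxx addn0.
  case: ifP => // xp; case/negP: hp; apply/hasP; exists x => //; exact: mem_head.
have iys y : y \in t -> index y s = size p + (index y t).+1.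
  move=> yt; rewrite e index_cat.
  have -> : (y \in p) = false.
    apply/negP => yp; case/negP: hp; apply/hasP; exists y => //.
    by rewrite in_cons yt orbT.
  rewrite /=; case: eqP => // eyx; subst y; by rewrite yt in xt.
have E : toggle le x (St R t) = St R (x :: t).
  apply: step => //.
  - move=> y hy.
    have h : index x s <= index y s by apply: (proj2 hs); rewrite /osum_le hy orbT.
    have := ms y; rewrite e mem_cat in_cons => /orP [yp|/orP [/eqP eyx|//]].
      move: h; rewrite ixs e index_cat yp => h; rewrite -index_mem in yp; by move: h; rewrite leqNgt yp.
    by subst y; rewrite ltnn in hy.
  - move=> y yt; rewrite leqNgt; apply/negP => hy.
    have : index y s <= index x s by apply: (proj2 hs); rewrite /osum_le hy orbT.
    rewrite ixs iys //; lia.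
split; first by rewrite /= H1.
by rewrite -E; apply: toggle_ic.
Qed.

Lemma caseA : (I == set0) || (top_summand a \subset I) || (I \subset top_summand a) ->
  P1 (~: I) /\ P2 (~: I).
Proof.
move=> hA; move/icP: hI => ic.
have [t0 ht0] := @lev_ex n.-1 ltac:(slia).
case/orP: hA => [/orP [/eqP I0 | /subsetP top] | /subsetP sub].
- split.
    by move=> x; rewrite I0 in_set0.
  move=> x xI; rewrite in_setC xI; split => [_|//]; split.
    by move=> w z _ _ _; rewrite in_setC I0 in_set0.
  by move=> u z; rewrite I0 in_set0.
- have topI y : lv y = n.-1 -> y \in I by move=> h; apply: top; rewrite inE; apply/eqP.
  have t0I : t0 \in I by apply: topI.
  split.
    move=> x xI; rewrite in_setC xI; split => //; case=> [[u uI hu] [w wI hw]].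
    rewrite in_setC in wI; case/negP: wI.
    case: (eqVneq (lv w) n.-1) => hw'; first by apply: topI.
    have := lv_lt w; move=> hlt; apply: (ic x t0 w) => //; slia.
  move=> x xI; rewrite in_setC xI; split => [_|//]; split.
    move=> w z; rewrite !in_setC => wI h1 h2; apply/negP => zI; case/negP: wI.
    case: (eqVneq (lv w) n.-1) => hw'; first by apply: topI.
    have := lv_lt w; move=> hlt; apply: (ic z t0 w) => //; slia.
  move=> u z uI h1 h2; case/negP: xI.
  case: (eqVneq (lv x) n.-1) => hx'; first by apply: topI.
  have := lv_lt x; move=> hlt; apply: (ic u t0 x) => //; slia.
- have subl y : y \in I -> lv y = n.-1 by move/sub; rewrite inE => /eqP.
  split.
    move=> x xI; rewrite in_setC xI; split => //; case=> [[u uI hu] [w wI hw]].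
    have := subl u uI; have := lv_lt x; slia.
  move=> x xI; rewrite in_setC xI; split => [_|//]; split.
    move=> w z; rewrite !in_setC => wI h1 h2; apply/negP => zI.
    have := subl z zI; have := lv_lt w; slia.
  move=> u z uI h1 h2; have := subl u uI; have := lv_lt x; slia.
Qed.

Lemma caseB : ~~ ((I == set0) || (top_summand a \subset I) || (I \subset top_summand a)) ->
  P1 (Delta le (ceiling le I) :\: Delta le (Min le I)) /\
  P2 (Delta le (ceiling le I) :\: Delta le (Min le I)).
Proof.
move=> hB; move/icP: hI => ic.
rewrite !negb_or in hB; case/andP: hB => /andP [nI0 ntop] nsub.
have [y0 y0I] := set0Pn _ nI0.
have [t1 t1top t1I] := subsetPn ntop.
have [y1 y1I y1top] := subsetPn nsub.
rewrite inE in t1top; rewrite inE in y1top.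
have ht1 : lv t1 = n.-1 by apply/eqP.
have hy1 : lv y1 != n.-1 by [].
have exl : exists q, [exists y in I, lv y == q].
  by exists (lv y0); apply/existsP; exists y0; rewrite y0I eqxx.
case: (ex_minnP exl) => l /existsP [m0 /andP [m0I /eqP hm0]] lmin.
have L2 y : y \in I -> l <= lv y.
  by move=> yI; apply: lmin; apply/existsP; exists y; rewrite yI eqxx.
have exc : exists q, (l < q) && [exists y, (y \notin I) && (lv y == q)].
  exists (lv t1); apply/andP; split.
    have := L2 y1 y1I; have := lv_lt y1; move/eqP: hy1; slia.
  by apply/existsP; exists t1; rewrite t1I eqxx.
case: (ex_minnP exc) => c /andP [lc /existsP [zc /andP [zcI /eqP hzc]]] cmin.
have C2 y : l < lv y -> lv y < c -> y \in I.
  move=> h1 h2; apply/negPn/negP => yI.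
  have := cmin (lv y) ltac:(by rewrite h1; apply/existsP; exists y; rewrite yI eqxx); slia.
have Ib y : y \in I -> lv y <= c.
  move=> yI; rewrite leqNgt; apply/negP => h; case/negP: zcI.
  apply: (ic m0 y zc) => //; slia.
have minE m : (m \in Min le I) = (m \in I) && (lv m == l).
  rewrite inE; apply/andP/andP => [[mI /forallP H]|[mI /eqP hm]].
  - split => //; apply/eqP; have := L2 m mI.
    suff : ~ l < lv m by slia.
    move=> h; move: (H m0); rewrite m0I /= /osum_le -/(lv m0) -/(lv m) hm0 h orbT /=.
    by move/eqP => e; subst m; slia.
  - split => //; apply/forallP => y; apply/implyP => yI; apply/implyP.
    rewrite /osum_le -/(lv y) -/(lv m) => /orP [//|h]; have := L2 y yI; slia.
have dminE y : (y \in Delta le (Min le I)) = ((y \in I) && (lv y == l)) || (lv y < l).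
  rewrite inE; apply/existsP/idP => [[m /andP [mM hym]]|H].
  - rewrite minE in mM; case/andP: mM => mI /eqP hm.
    move: hym; rewrite /osum_le -/(lv y) -/(lv m) => /orP [/eqP ->|h].
      by rewrite mI hm eqxx.
    by rewrite -hm h orbT.
  - case/orP: H => [/andP [yI /eqP hy]|h].
      by exists y; rewrite minE yI hy eqxx /osum_le eqxx.
    by exists m0; rewrite minE m0I hm0 eqxx /osum_le -/(lv y) -/(lv m0) hm0 h orbT.
have nE y : (y \in Nabla le I :\: I) = (y \notin I) && (l < lv y).
  rewrite !inE; apply/andP/andP => [[yI /existsP [v /andP [vI hv]]]|[yI h]]; split => //.
    move: hv; rewrite /osum_le -/(lv y) -/(lv v) => /orP [/eqP e|h].
      by subst v; rewrite vI in yI.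
    have := L2 v vI; slia.
  by apply/existsP; exists m0; rewrite m0I /osum_le -/(lv m0) -/(lv y) hm0 h orbT.
have ceilE y : (y \in ceiling le I) = (y \notin I) && (lv y == c).
  rewrite /ceiling inE nE; apply/andP/andP => [[/andP [yI hy] /forallP H]|[yI /eqP hy]].
  - split => //; apply/eqP; case: (ltngtP (lv y) c) => h //.
      by have := C2 y hy h; rewrite (negbTE yI).
    move: (H zc); rewrite nE zcI hzc lc /= /osum_le -/(lv zc) -/(lv y) hzc h orbT /=.
    by move/eqP => e; subst y; slia.
  - split; first by rewrite yI hy lc.
    apply/forallP => y'; rewrite nE; apply/implyP => /andP [y'I h']; apply/implyP.
    rewrite /osum_le -/(lv y) -/(lv y') => /orP [//|h2].
    by have := C2 y' h' ltac:(slia); rewrite (negbTE y'I).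
have dceilE y : (y \in Delta le (ceiling le I)) = (lv y < c) || (y \notin I) && (lv y == c).
  rewrite inE; apply/existsP/idP => [[m /andP [mM hym]]|H].
  - rewrite ceilE in mM; case/andP: mM => mI /eqP hm.
    move: hym; rewrite /osum_le -/(lv y) -/(lv m) => /orP [/eqP ->|h].
      by rewrite mI hm eqxx orbT.
    by rewrite -hm h.
  - case/orP: H => [h|/andP [yI /eqP hy]].
      by exists zc; rewrite ceilE zcI hzc eqxx /osum_le -/(lv y) -/(lv zc) hzc h orbT.
    by exists y; rewrite ceilE yI hy eqxx /osum_le eqxx.
set R' := [set y | (l <= lv y <= c) && ((y \notin I) || (l < lv y < c))].
have -> : Delta le (ceiling le I) :\: Delta le (Min le I) = R'.
  apply/setP => y; rewrite in_setD dceilE dminE inE.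
  move: (lv y) => k; case: (y \in I) => /=;
  case: (ltngtP k l) => h1; case: (ltngtP k c) => h2 //=; try slia.
have zcR : zc \in R' by rewrite inE zcI hzc leqnn (ltnW lc).
have m0R : m0 \notin R' by rewrite inE m0I hm0 ltnn /= andbF.
split.
- move=> x xI; have := L2 x xI; have := Ib x xI; move=> h1 h2.
  rewrite inE xI /=; split.
  + move=> /andP [_ /andP [g1 g2]]; split.
      by exists m0 => //; rewrite hm0.
    by exists zc => //; rewrite hzc.
  + case=> [[u uI hu] [w wR hw]]; have := L2 u uI.
    move: wR; rewrite inE => /andP [/andP [_ hwc] _] hl.
    apply/andP; split; slia.
- move=> x xI; split.
  + rewrite inE xI /= andbT => /andP [g1 g2]; split.
      move=> w z; rewrite !inE => /andP [/andP [_ hwc] _] h1 h2.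
      apply/andP; split; [|apply/orP; right]; slia.
    move=> u z uI h1 h2; have := L2 u uI; move=> hu; apply: C2; slia.
  + case=> A B; rewrite inE xI /= andbT.
    case: (ltnP (lv x) l) => g1.
      have := A zc m0 zcR; rewrite hm0 hzc (negbTE m0R) => H.
      by have := H g1 lc.
    case: (leqP (lv x) c) => g2; first by rewrite ?g1 ?g2.
    by have := B m0 zc m0I ltac:(slia) ltac:(slia); rewrite (negbTE zcI).
Qed.
End S.

Theorem theorem3p12 (n : nat) (a : 'I_n -> nat)
    (hn : 0 < n) (ha : forall i, 0 < a i)
    (s : seq (OSum a)) (hs : linear_extension (@osum_le n a) s)
    (I : {set OSum a}) (hI : interval_closed (@osum_le n a) I) :
  Row (@osum_le n a) s I =
  if (I == set0) || (top_summand a \subset I) || (I \subset top_summand a)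
  then ~: I
  else Delta (@osum_le n a) (ceiling (@osum_le n a) I)
         :\: Delta (@osum_le n a) (Min (@osum_le n a) I).
Proof.
case: ifP => h.
- have [p1 p2] := caseA hn ha hI h; exact: (@engine n a hn I hI s hs _ p1 p2).
- have [p1 p2] := caseB hn hI (negbT h); exact: (@engine n a hn I hI s hs _ p1 p2).
Qed.
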